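(* Let $n,m\in\mathbb{N}$. If for $i\in I_{nm}$ there exist $j,j'\in I_n$, $k,k'\in I_m$ and $\gamma,\gamma'\in SL(2,\mathbb{Z})$ such that $\gamma A_jA_k=A_i=\gamma'A_{j'}A_{k'}$, then $j=j'$, $k=k'$ and $\gamma=\gamma'$.
   Context: For $N\in\mathbb{N}$: $I_N=\{[x:y]_N:\gcd(x,y,N)=1\}$, where $[x:y]_N$ is the class of $(x,y)\in\mathbb{Z}^2$ under $(x,y)\sim(x',y')$ iff $x'\equiv kx$, $y'\equiv ky\pmod N$ for some $k$ with $\gcd(k,N)=1$. The map $(c,b)\mapsto[c:d_N(c,b)]_N$ with $d_N(c,b)=\min_{0\le k\le c-1}\{c+b+kN/c:\gcd(c,b+kN/c)=1\}$ is a bijection from $\{(c,b):c\ge1,\ c\mid N,\ 0\le b\le N/c-1,\ \gcd(c,b,N/c)=1\}$ onto $I_N$, and for $i\in I_N$ one sets $A_i=\begin{pmatrix}c&b\\0&N/c\end{pmatrix}$ where $(c,b)$ corresponds to $i$. *)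

(* Defs.v *)
From HB Require Import structures.
From mathcomp Require Import all_boot all_order all_algebra.
Set Implicit Arguments. Unset Strict Implicit. Unset Printing Implicit Defensive.
Import Order.TTheory GRing.Theory Num.Theory.
Local Open Scope ring_scope.

(* Elements of I_N are represented by pairs (x,y) in Z^2; two
   representatives denote the same element [x:y]_N iff [equivI N]. *)

Definition inI (N : nat) (p : int * int) : bool :=
  gcdz (gcdz p.1 p.2) N%:Z == 1.

Definition equivI (N : nat) (p q : int * int) : Prop :=
  exists k : int, coprimez k N%:Z /\
    (q.1 == k * p.1 %[mod N%:Z])%Z /\ (q.2 == k * p.2 %[mod N%:Z])%Z.

Definition Pset (N c b : nat) : bool :=
  [&& (0 < c)%N, (c %| N)%N, (b < N %/ c)%N & gcdn (gcdn c b) (N %/ c) == 1%N].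

Definition dN (N c b : nat) : nat :=
  \big[minn/(c + b + c * (N %/ c))%N]_(k < c | coprime c (b + k * (N %/ c)))
     (c + b + k * (N %/ c))%N.

Definition Amat (N c b : nat) : 'M[int]_2 :=
  \matrix_(r < 2, s < 2)
    (if r == 0 then (if s == 0 then c%:Z else b%:Z)
     else (if s == 0 then 0 else (N %/ c)%N%:Z)).

(* isA N i M  :<->  M = A_i, i.e. M = A_(c,b) where (c,b) is the (unique)
   parameter with [c : d_N(c,b)]_N = i. *)
Definition isA (N : nat) (i : int * int) (M : 'M[int]_2) : Prop :=
  exists c b : nat, Pset N c b /\ equivI N ((c%:Z), (dN N c b)%:Z) i
                    /\ M = Amat N c b.

Definition inSL2Z (g : 'M[int]_2) : Prop := \det g = 1.

(* Main.v *)
Require Import Defs.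
From mathcomp Require Import all_boot all_order all_algebra zify ring lra.
Set Implicit Arguments. Unset Strict Implicit. Unset Printing Implicit Defensive.
Import Order.TTheory GRing.Theory Num.Theory.
Local Open Scope ring_scope.

Lemma l1 : lift ord0 ord0 = 1 :> 'I_2. Proof. exact/val_inj. Qed.
Lemma l2 : lift (lift ord0 ord0) 0 = 0 :> 'I_2. Proof. exact/val_inj. Qed.
Lemma l3 : lift ord0 0 = 1 :> 'I_2. Proof. exact/val_inj. Qed.
Lemma l4 : lift 0 0 = 1 :> 'I_2. Proof. exact/val_inj. Qed.
Lemma l5 : lift 1 (0 : 'I_1) = 0 :> 'I_2. Proof. exact/val_inj. Qed.

Lemma mul2E (A B : 'M[int]_2) i j : (A *m B) i j = A i 0 * B 0 j + A i 1 * B 1 j.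
Proof. by rewrite mxE !big_ord_recl big_ord0 addr0 l1. Qed.

Lemma det2 (g : 'M[int]_2) : \det g = g 0 0 * g 1 1 - g 0 1 * g 1 0.
Proof.
rewrite (expand_det_row _ 0) !big_ord_recl big_ord0 addr0 /cofactor !det_mx11 !mxE /=.
rewrite ?l1 ?l3 ?l4 ?l2 ?l5 !expr0 !expr1 mul1r mulN1r mulrN. by [].
Qed.

Lemma x (q h x y : int) : 0 <= x < h -> 0 <= y < h -> x - y = q * h -> x = y.
Proof. move=> *. have [q0|q0|q0] := ltgtP q 0; nia. Qed.
Lemma modE (N x y : int) : (x == y %[mod N])%Z <-> exists s, x - y = s * N.
Proof. rewrite eqz_mod_dvd; split; [by move/dvdzP | by move=> H; apply/dvdzP]. Qed.

Lemma equivI_sym N p q : equivI N p q -> equivI N q p.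
Proof.
case=> k [ck [/modE [s1 H1] /modE [s2 H2]]].
case/coprimezP: ck => [[u v] /= Huv].
exists u; split; [|split].
- by apply/coprimezP; exists (k, v) => /=; rewrite mulrC.
- apply/modE; exists (p.1 * v - u * s1).
  have -> : q.1 = k * p.1 + s1 * N%:Z by rewrite -H1; ring.
  transitivity (p.1 * (u * k+v * N%:Z) - u * (k * p.1+s1 * N%:Z)); [by rewrite Huv mulr1 | ring].
- apply/modE; exists (p.2 * v - u * s2).
  have -> : q.2 = k * p.2 + s2 * N%:Z by rewrite -H2; ring.
  transitivity (p.2 * (u * k+v * N%:Z) - u * (k * p.2+s2 * N%:Z)); [by rewrite Huv mulr1 | ring].
Qed.

Lemma equivI_trans N p q r : equivI N p q -> equivI N q r -> equivI N p r.
Proof.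
case=> k1 [c1 [/modE [s1 H1] /modE [s2 H2]]].
case=> k2 [c2 [/modE [t1 G1] /modE [t2 G2]]].
exists (k2 * k1); split; [|split].
- by rewrite coprimezMl c1 c2.
- apply/modE; exists (t1 + k2 * s1).
  transitivity ((r.1 - k2 * q.1) + k2 * (q.1 - k1 * p.1)); first ring.
  by rewrite G1 H1; ring.
- apply/modE; exists (t2 + k2 * s2).
  transitivity ((r.2 - k2 * q.2) + k2 * (q.2 - k1 * p.2)); first ring.
  by rewrite G2 H2; ring.
Qed.

Lemma AmatE N c b i j : Amat N c b i j = (if i == 0 then (if j == 0 then c%:Z else b%:Z)
     else (if j == 0 then 0 else (N %/ c)%N%:Z)).
Proof. by rewrite mxE. Qed.

Lemma decomp n m a b e f c B (g : 'M[int]_2) :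
  Pset n a b -> Pset m e f -> Pset (n * m) c B -> \det g = 1 ->
  g *m Amat n a b *m Amat m e f = Amat (n * m) c B ->
  c = (a * e)%N /\ [/\ ((n * m) %/ c = (n %/ a) * (m %/ e))%N, g 0 0 = 1, g 1 0 = 0, g 1 1 = 1 &
     B%:Z = a%:Z * f%:Z + b%:Z * (m %/ e)%N%:Z + g 0 1 * ((n %/ a)%N%:Z * (m %/ e)%N%:Z)].
Proof.
case/and4P=> a0 an bd _; case/and4P=> e0 em fh _; case/and4P=> c0 cnm _ _.
rewrite det2 => dg H.
have E i j : (g *m Amat n a b *m Amat m e f) i j = Amat (n * m) c B i j by rewrite H.
have E00 := E 0 0; have E01 := E 0 1; have E10 := E 1 0; have E11 := E 1 1.
rewrite /= !mul2E !AmatE /= in E00 E01 E10 E11.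
have dn := divnK an; have dm := divnK em; have dc := divnK cnm.
move: (n %/ a)%N dn E00 E01 E10 E11 => d dn E00 E01 E10 E11.
move: (m %/ e)%N dm E00 E01 E10 E11 => h dm E00 E01 E10 E11.
move: ((n * m) %/ c)%N dc E11 => D dc E11.
rewrite !mulr0 !addr0 in E00 E01 E10 E11.
have g10 : g 1 0 = 0.
  move/eqP: E10; rewrite -mulrA mulf_eq0 => /orP [/eqP //|]; lia.
rewrite g10 mulr0 subr0 in dg; rewrite g10 in E11.
have g0 : 0 < g 0 0.
  case: (ltrP 0 (g 0 0)) => // g0.
  have : g 0 0 * (a%:Z * e%:Z) <= 0 by apply: mulr_le0_ge0 => //; lia.
  rewrite mulrA E00; lia.
have g1 : 0 < g 1 1 by rewrite -(pmulr_rgt0 _ g0) dg.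
have g00 : g 0 0 = 1 by nia.
rewrite g00 in dg E00 E01 E11.
have g11 : g 1 1 = 1 by lia.
split; first by lia.
split => //; first by lia.
rewrite -E01; ring.
Qed.

Lemma copah nm a e f b d h c B (t : int) :
  Pset nm c B -> c = (a * e)%N -> (nm %/ c = d * h)%N ->
  B%:Z = a%:Z * f%:Z + b%:Z * h%:Z + t * (d%:Z * h%:Z) -> coprime a h.
Proof.
case/and4P=> _ _ _ /eqP gc ce Dc EB.
have p1 : (gcdn a h %| a)%N by apply: dvdn_gcdl.
have p2 : (gcdn a h %| h)%N by apply: dvdn_gcdr.
have p3 : (gcdn a h %| B)%N.
  have : ((gcdn a h)%:Z %| B%:Z)%Z.
    rewrite EB; apply: rpredD; first apply: rpredD.
    - by apply: dvdz_mulr; rewrite dvdzE.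
    - by apply: dvdz_mull; rewrite dvdzE.
    - by apply: dvdz_mull; apply: dvdz_mull; rewrite dvdzE.
  by rewrite dvdzE.
have : (gcdn a h %| gcdn (gcdn c B) (nm %/ c))%N.
  rewrite !dvdn_gcd p3 Dc ce dvdn_mulr //= dvdn_mull //.
by rewrite gc dvdn1.
Qed.

Lemma smallz (q h x y : int) : 0 <= x < h -> 0 <= y < h -> x - y = q * h -> x = y.
Proof. move=> *. have [q0|q0|q0] := ltgtP q 0; nia. Qed.

Lemma uniq n m a b e f a' b' e' f' c B (t t' : int) :
  Pset n a b -> Pset m e f -> Pset n a' b' -> Pset m e' f' -> Pset (n * m) c B ->
  c = (a * e)%N -> c = (a' * e')%N ->
  ((n * m) %/ c = (n %/ a) * (m %/ e))%N -> ((n * m) %/ c = (n %/ a') * (m %/ e'))%N ->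
  B%:Z = a%:Z * f%:Z + b%:Z * (m %/ e)%N%:Z + t * ((n %/ a)%N%:Z * (m %/ e)%N%:Z) ->
  B%:Z = a'%:Z * f'%:Z + b'%:Z * (m %/ e')%N%:Z + t' * ((n %/ a')%N%:Z * (m %/ e')%N%:Z) ->
  [/\ a = a', b = b', e = e', f = f' & t = t'].
Proof.
move=> P1 P2 P1' P2' P ce ce' D D' EB EB'.
have co := copah P ce D EB; have co' := copah P ce' D' EB'.
case/and4P: P1 => a0 an bd _; case/and4P: P2 => e0 em fh _.
case/and4P: P1' => a0' an' bd' _; case/and4P: P2' => e0' em' fh' _.
have dn := divnK an; have dm := divnK em; have dn' := divnK an'; have dm' := divnK em'.
have ee : e = e'.
  have ge : gcdn c m = e by rewrite ce -dm -muln_gcdl (eqP co) mul1n.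
  have ge' : gcdn c m = e' by rewrite ce' -dm' -muln_gcdl (eqP co') mul1n.
  by rewrite -ge ge'.
subst e'.
have aa : a = a' by apply/eqP; rewrite -(eqn_pmul2r e0) -ce -ce'.
subst a'.
move: (n %/ a)%N (m %/ e)%N dn dm bd fh bd' fh' EB EB' co co' D D' => d h dn dm bd fh bd' fh' EB EB' co co' D D'.
have ff : f = f'.
  have : (h%:Z %| f%:Z - f'%:Z)%Z.
    rewrite -(@Gauss_dvdzr h%:Z a%:Z); last by rewrite coprimez_sym coprimezE.
    apply/dvdzP; exists (b'%:Z - b%:Z + (t' - t) * d%:Z).
    transitivity ((a%:Z * f%:Z + b%:Z * h%:Z + t * (d%:Z * h%:Z)) - (a%:Z * f'%:Z + b'%:Z * h%:Z + t' * (d%:Z * h%:Z)) + (b'%:Z - b%:Z + (t' - t) * d%:Z) * h%:Z); first ring.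
    by rewrite -EB -EB' subrr add0r.
  case/dvdzP => q Hq; apply/eqP; rewrite -(eqr_nat int); apply/eqP.
  by apply: (smallz (q := q) (h := h%:Z)) => //; timeout 20 lia.
subst f'.
have e2 : b%:Z - b'%:Z = (t' - t) * d%:Z.
  have hp : h%:Z != 0 by timeout 20 lia.
  apply: (mulIf hp).
  transitivity ((a%:Z * f%:Z + b%:Z * h%:Z + t * (d%:Z * h%:Z)) - (a%:Z * f%:Z + b'%:Z * h%:Z + t' * (d%:Z * h%:Z)) + (t' - t) * d%:Z * h%:Z); first ring.
  by rewrite -EB -EB' subrr add0r.
have bb : b = b'.
  apply/eqP; rewrite -(eqr_nat int); apply/eqP.
  by apply: (smallz (q := t' - t) (h := d%:Z)) => //; timeout 20 lia.
subst b'.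
split => //.
have : (t' - t) * d%:Z == 0 by rewrite -e2 subrr.
rewrite mulf_eq0 => /orP [|]; first by rewrite subr_eq0 => /eqP ->.
move=> /eqP d0; lia.
Qed.

Lemma ord2P (i : 'I_2) : i = 0 \/ i = 1.
Proof. case: i => [[|[|//]]] Hi; [left|right]; exact/val_inj. Qed.

Unset Implicit Arguments.
Theorem mainTheorem14 (n m : nat) (i j j' k k' : int * int)
  (g g' Ai Aj Aj' Ak Ak' : 'M[int]_2) :
  inI (n * m) i -> inI n j -> inI n j' -> inI m k -> inI m k' ->
  inSL2Z g -> inSL2Z g' ->
  isA (n * m) i Ai -> isA n j Aj -> isA n j' Aj' -> isA m k Ak -> isA m k' Ak' ->
  g *m Aj *m Ak = Ai -> g' *m Aj' *m Ak' = Ai ->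
  equivI n j j' /\ equivI m k k' /\ g = g'.
Proof.
move=> _ _ _ _ _ dg dg' [c [B [P [Ei ->]]]] [a [b [P1 [Ej ->]]]] [a' [b' [P1' [Ej' ->]]]].
move=> [e [f [P2 [Ek ->]]]] [e' [f' [P2' [Ek' ->]]]] H H'.
have [ce [D g00 g10 g11 EB]] := decomp P1 P2 P dg H.
have [ce' [D' g00' g10' g11' EB']] := decomp P1' P2' P dg' H'.
have [aa bb ee ff tt] := uniq P1 P2 P1' P2' P ce ce' D D' EB EB'.
subst a' b' e' f'.
split; [|split].
- exact: equivI_trans (equivI_sym Ej) Ej'.
- exact: equivI_trans (equivI_sym Ek) Ek'.
- apply/matrixP => x y; case: (ord2P x) => ->; case: (ord2P y) => ->; congruence.
Qed.
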